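(* Let $P=\sum_{S\in\mathbb{S}_P}S\subset\mathbb{E}^3$ be a three-dimensional zonotope with generator set $\mathbb{S}_P$ consisting of pairwise non-parallel segments centered at the origin, let $S_0\in\mathbb{S}_P$, and let $\vec S_0$ be the vector from one endpoint of $S_0$ to the other. Let $P^*=\sum_{S\in\mathbb{S}_P\setminus\{S_0\}}S$. Then $$P\cap(P+\vec S_0)=P^*+\tfrac12\vec S_0.$$
   Context: A zonotope is a Minkowski sum of finitely many segments; its generator set is such a family of segments. *)

(* Defs.v *)
From HB Require Import structures.
From mathcomp Require Import all_boot all_order all_algebra.
From mathcomp Require Import classical_sets.
Set Implicit Arguments. Unset Strict Implicit. Unset Printing Implicit Defensive.
Import Order.TTheory GRing.Theory Num.Theory.
Local Open Scope ring_scope.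
Local Open Scope classical_set_scope.

Section Zono.
Variable R : realFieldType.
Local Notation pt := 'rV[R]_3.

Definition msum (A B : set pt) : set pt := [set a + b | a in A & b in B].

Definition translate (A : set pt) (v : pt) : set pt := [set a + v | a in A].

(* the segment centered at the origin with endpoints -v/2 and v/2;
   the vector from one endpoint to the other is v *)
Definition csegment (v : pt) : set pt :=
  [set t *: v | t in [set t : R | -(1/2) <= t <= 1/2]].

Definition parallel (u v : pt) : Prop := exists c : R, u = c *: v \/ v = c *: u.

Definition zonotope (n : nat) (G : 'M[R]_(n, 3)) (A : {set 'I_n}) : set pt :=
  \big[msum/[set 0]]_(i in A) csegment (row i G).

End Zono.

(* Main.v *)
Require Import Defs.
From HB Require Import structures.
From mathcomp Require Import all_boot all_order all_algebra.
From mathcomp Require Import classical_sets boolp.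
From mathcomp Require Import lra.
Import Order.TTheory GRing.Theory Num.Theory.
Local Open Scope ring_scope.
Local Open Scope classical_set_scope.

Section S.
Variable R : realFieldType.
Local Notation pt := 'rV[R]_3.

Lemma msumA : associative (@msum R).
Proof.
move=> A B C; apply/seteqP; split => x /=.
- case=> a Aa [_ [b Bb [c Cc <-]] <-]. exists (a + b).
    by exists a => //; exists b.
  by exists c => //; rewrite addrA.
- case=> _ [a Aa [b Bb <-]] [c Cc <-]. exists a => //. exists (b + c); last by rewrite addrA.
  by exists b => //; exists c.
Qed.

Lemma msumC : commutative (@msum R).
Proof.
move=> A B; apply/seteqP; split => x /=.
- case=> a Aa [b Bb <-]; exists b => //; exists a => //; exact: addrC.
- case=> a Aa [b Bb <-]; exists b => //; exists a => //; exact: addrC.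
Qed.

Lemma msum0 : left_id [set (0:pt)] (@msum R).
Proof.
move=> A; apply/seteqP; split => x /=.
- by case=> a -> [b Bb <-]; rewrite add0r.
- by move=> Ax; exists 0 => //; exists x => //; rewrite add0r.
Qed.

Definition convex (A : set pt) := forall a b t, A a -> A b -> 0 <= t <= 1 -> A (a + t *: (b - a)).

Lemma convex0 : convex [set 0].
Proof. by move=> a b t /= -> ->; rewrite subrr scaler0 addr0. Qed.

Lemma convex_msum A B : convex A -> convex B -> convex (msum A B).
Proof.
move=> cA cB a b t [a1 A1 [a2 A2 <-]] [b1 B1 [b2 B2 <-]] ht.
exists (a1 + t *: (b1 - a1)); first exact: cA.
exists (a2 + t *: (b2 - a2)); first exact: cB.
by rewrite opprD [in RHS]addrACA [in RHS]scalerDr [in RHS]addrACA.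
Qed.

Lemma convex_seg w : convex (csegment w).
Proof.
move=> a b t [s /andP[s1 s2] <-] [r /andP[r1 r2] <-] /andP[t0 t1].
exists (s + t * (r - s)).
  apply/andP; split; nra.
by rewrite -scalerBl scalerDl scalerA.
Qed.
End S.
Arguments convex {R}.

HB.instance Definition _ (R : realFieldType) :=
  Monoid.isComLaw.Build (set 'rV[R]_3) [set 0] (@msum R) (@msumA R) (@msumC R) (@msum0 R).

Lemma convex_zono (R : realFieldType) n (G : 'M[R]_(n,3)) A : convex (zonotope G A).
Proof.
rewrite /zonotope; apply: (big_ind (@convex R)).
- exact: convex0.
- exact: convex_msum.
- move=> i _; exact: convex_seg.
Qed.

Theorem corollary4p2 (R : realFieldType) (n : nat) (G : 'M[R]_(n, 3))
  (i0 : 'I_n)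
  (Hnz : forall i : 'I_n, row i G != 0)
  (Hnpar : forall i j : 'I_n, i != j -> ~ parallel (row i G) (row j G))
  (H3 : \rank G = 3%N) :
  zonotope G (finset.setT) `&` translate (zonotope G (finset.setT)) (row i0 G)
  = translate (zonotope G (finset.setC (finset.set1 i0))) ((1/2) *: row i0 G).
Proof.
set v := row i0 G; set Z := zonotope G (finset.setC _).
have cZ : convex Z by exact: convex_zono.
have EP : zonotope G finset.setT = msum (csegment v) Z.
  rewrite /Z /zonotope (bigD1 i0) ?inE //=; apply: f_equal.
  by apply: eq_bigl => i; rewrite !inE.
rewrite EP; apply/seteqP; split => x /=.
- case=> [[a [s /andP[s1 s2] <-] [z1 Z1 Ex1]]] [y [b [r /andP[r1 r2] <-] [z2 Z2 <-]] Ex2].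
  exists (x - (1/2) *: v); last by rewrite subrK.
  have Ez1 : z1 = x - s *: v by rewrite -Ex1 (addrC (s *: v)) addrK.
  have Ez2 : z2 = x - (r + 1) *: v.
    by apply/eqP; rewrite eq_sym subr_eq -Ex2 scalerDl scale1r addrA (addrC z2).
  have [rs|rs] := eqVneq (r + 1) s.
    have h : s = 1/2 by lra.
    by rewrite -h -Ez1.
  have := cZ z2 z1 ((r + 1 - 1/2) / (r + 1 - s)) Z2 Z1.
  have d0 : r + 1 - s != 0 by rewrite subr_eq0.
  have dp : 0 < r + 1 - s.
    by rewrite lt0r d0 /=; lra.
  have D : x - s *: v - (x - (r + 1) *: v) = (r + 1 - s) *: v.
    by rewrite opprB addrC addrA subrK scalerBl.
  rewrite Ez1 Ez2 D scalerA -scaleNr -(addrA x) -scalerDl.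
  have -> : - (r + 1) + (r + 1 - 1/2) / (r + 1 - s) * (r + 1 - s) = - (1/2).
    by rewrite divfK //; lra.
  rewrite scaleNr; apply; apply/andP; split.
    by apply: divr_ge0; lra.
  by rewrite ler_pdivrMr // mul1r; lra.
- case=> z Zz <-; split.
    exists ((1/2) *: v); last by exists z => //; rewrite addrC.
    by exists (1/2) => //; apply/andP; split; lra.
  exists ((-(1/2)) *: v + z).
    exists ((-(1/2)) *: v); first by exists (-(1/2)) => //; apply/andP; split; lra.
    by exists z.
  rewrite addrAC -{2}(scale1r v) -scalerDl addrC; congr (_ + _ *: _); lra.
Qed.
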